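(* Let $G$ be a finite simple unmixed graph and suppose the graph $\mathcal{G}=\mathcal{G}_{I_c(G)}$ is a tree. Then $I_c(G)$ is linearly presented if and only if for every path $\{C_1,\ldots,C_n\}$ of $\mathcal{G}$ one has $\alpha_0(G)\ge n-1$ and $\left|\bigcap_{j=1}^n C_j\right|=\alpha_0(G)-(n-1)$.
   Context: $G$ has vertices $t_1,\ldots,t_s$; $S=K[t_1,\ldots,t_s]$, $K$ a field. $G$ is unmixed if all minimal vertex covers (inclusion-minimal vertex sets meeting every edge) have the same size $\alpha_0(G)$. $I_c(G)$ is generated by $\prod_{t_i\in C}t_i$ over minimal vertex covers $C$. The graph $\mathcal{G}$ has the minimal vertex covers as vertices, with $\{C_i,C_j\}$ ($i\ne j$) an edge iff $|C_i\cup C_j|=|C_i|+1$. A path $\{C_1,\ldots,C_n\}$ is a sequence of distinct vertices with $\{C_i,C_{i+1}\}$ an edge for all $i$. A monomial ideal minimally generated by $u_1,\dots,u_r$ is linearly presented if all $u_i$ have the same degree and the kernel of $S^r\to S$, $e_i\mapsto u_i$, is generated by vectors with linear-form entries. *)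

(* Defs.v *)
From HB Require Import structures.
From mathcomp Require Import all_boot all_algebra.
From mathcomp Require Import mpoly.

Set Implicit Arguments.
Unset Strict Implicit.
Unset Printing Implicit Defensive.

Import GRing.Theory.
Local Open Scope ring_scope.

(* Graphs: a finite simple graph on vertex set 'I_s (vertex i <-> t_i) *)

Definition simple_graph (s : nat) (e : rel 'I_s) : Prop :=
  irreflexive e /\ ssrbool.symmetric e.

Definition vertex_cover (s : nat) (e : rel 'I_s) (C : {set 'I_s}) : bool :=
  [forall x, forall y, e x y ==> (x \in C) || (y \in C)].

Definition min_vertex_cover (s : nat) (e : rel 'I_s) (C : {set 'I_s}) : bool :=
  minset (vertex_cover e) C.

Definition unmixed (s : nat) (e : rel 'I_s) : Prop :=
  forall C D : {set 'I_s}, min_vertex_cover e C -> min_vertex_cover e D ->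
    #|C| = #|D|.

Definition alpha0 (s : nat) (e : rel 'I_s) : nat :=
  #|[arg min_(C < [set: 'I_s] | vertex_cover e C) #|C| ]|.

(* The graph \mathcal{G}: vertices = minimal vertex covers,            *)

Definition cov_adj (s : nat) (e : rel 'I_s) (C D : {set 'I_s}) : bool :=
  [&& min_vertex_cover e C, min_vertex_cover e D, C != D &
      #|C :|: D| == #|C|.+1].

Definition cov_path (s : nat) (e : rel 'I_s) (p : seq {set 'I_s}) : bool :=
  [&& p != [::], all (min_vertex_cover e) p, uniq p &
      path (cov_adj e) (head set0 p) (behead p)].

Definition cov_cycle (s : nat) (e : rel 'I_s) (p : seq {set 'I_s}) : bool :=
  [&& (3 <= size p)%N, all (min_vertex_cover e) p, uniq p &
      cycle (cov_adj e) p].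

Definition cov_graph_tree (s : nat) (e : rel 'I_s) : Prop :=
  (forall C D, min_vertex_cover e C -> min_vertex_cover e D ->
     exists p, cov_path e p /\ head set0 p = C /\ last set0 p = D) /\
  (forall p, ~~ cov_cycle e p).

(* p is homogeneous of degree d (every monomial of p has degree d;
   the zero polynomial is homogeneous of every degree) *)
Definition homog_of (K : fieldType) (s d : nat) (p : {mpoly K[s]}) : Prop :=
  forall m, m \in msupp p -> mdeg m = d.

Definition syzygy (K : fieldType) (s : nat) (us : seq {mpoly K[s]})
  (v : 'I_(size us) -> {mpoly K[s]}) : Prop :=
  \sum_(i < size us) v i * us`_i = 0.

Definition linearly_presented (K : fieldType) (s : nat) (us : seq {mpoly K[s]}) : Prop :=
  (exists d, forall u, u \in us -> homog_of d u) /\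
  (forall v, syzygy v ->
     exists (N : nat) (c : 'I_N -> {mpoly K[s]})
            (w : 'I_N -> 'I_(size us) -> {mpoly K[s]}),
       (forall k, syzygy (w k) /\ forall i, homog_of 1 (w k i)) /\
       (forall i, v i = \sum_(k < N) c k * w k i)).

Definition cover_monomial (K : fieldType) (s : nat) (C : {set 'I_s}) : {mpoly K[s]} :=
  \prod_(i in C) 'X_i.

Definition Ic_gens (K : fieldType) (s : nat) (e : rel 'I_s) : seq {mpoly K[s]} :=
  [seq cover_monomial K C | C <- enum (min_vertex_cover e)].

(* Main.v *)
Require Import Defs.
From HB Require Import structures.
From mathcomp Require Import all_boot all_algebra.
From mathcomp Require Import mpoly.
From mathcomp Require Import zify.

Set Implicit Arguments.
Unset Strict Implicit.
Unset Printing Implicit Defensive.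

Section Comb.
Variables (s : nat) (e : rel 'I_s).
Hypothesis unm : unmixed e.

Local Notation mvc := (min_vertex_cover e).
Local Notation adj := (cov_adj e).
Local Notation al := (alpha0 e).

Lemma mvc_card C : mvc C -> #|C| = al.
Proof.
move=> mC; rewrite /alpha0.
case: arg_minnP => [|A cA minA].
  by apply/forallP => x; apply/forallP => y; apply/implyP => _; rewrite !in_setT.
apply: unm => //; apply/minsetP; split => // B cB sBA.
apply/eqP; rewrite eqEcard sBA /=; exact: minA.
Qed.

Lemma adj_mvc C D : adj C D -> mvc C /\ mvc D.
Proof. by case/and4P. Qed.

Lemma adj_sym : ssrbool.symmetric adj.
Proof.
move=> C D; rewrite /cov_adj.
case mC: (mvc C); case mD: (mvc D) => //=.
by rewrite (eq_sym D C) setUC (mvc_card mC) (mvc_card mD).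
Qed.

Lemma adj_diff C D : adj C D -> exists a, C :\: D = [set a].
Proof.
move=> H; have [mC mD] := adj_mvc H.
move: H; rewrite /cov_adj mC mD /= => /andP[_ /eqP hU].
apply/cards1P; move: hU; rewrite cardsU cardsD (mvc_card mC) (mvc_card mD).
have := subset_leq_card (subsetIl C D); rewrite (mvc_card mC).
move=> h1 h2; apply/eqP; move: h1 h2; set x := #|_ :&: _|. lia.
Qed.

Lemma inter_step (X C D : {set 'I_s}) : X \subset C -> adj C D ->
  exists a, a \in C /\ a \notin D /\ X :&: D = X :\ a.
Proof.
move=> sXC H; have [a ha] := adj_diff H.
have : a \in C :\: D by rewrite ha set11.
rewrite inE => /andP[aD aC]; exists a; split => //; split => //.
apply/setP => x; rewrite !inE.
case xX: (x \in X); rewrite /= ?andbF ?andbT //.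
have xC : x \in C by apply: (subsetP sXC).
case: (eqVneq x a) => [->|xa]; first by rewrite (negbTE aD).
case xD: (x \in D) => //.
have : x \in C :\: D by rewrite inE xD xC.
by rewrite ha inE (negbTE xa).
Qed.


Definition inter (p : seq {set 'I_s}) := \bigcap_(C <- p) C.

Lemma inter_sub p C : C \in p -> inter p \subset C.
Proof.
rewrite /inter; elim: p => [|D p IH] //; rewrite inE big_cons.
case/orP => [/eqP ->|/IH h]; first exact: subsetIl.
exact: subset_trans (subsetIr _ _) h.
Qed.

Lemma inter_rcons x q z : inter (x :: rcons q z) = inter (x :: q) :&: z.
Proof. by rewrite /inter -rcons_cons big_rcons. Qed.

Lemma path_lb x q : path adj x q -> mvc x ->
  al <= #|inter (x :: q)| + size q /\
  (forall t, t \notin x -> has (fun C : {set 'I_s} => t \in C) (x :: q) -> t \notin last x q ->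
     al < #|inter (x :: q)| + size q).
Proof.
elim/last_ind: q => [|q z IH].
  move=> _ mx; rewrite /inter big_seq1 (mvc_card mx) addn0; split => //.
  by move=> t tx /=; rewrite orbF (negbTE tx).
rewrite rcons_path => /andP[pq ayz] mx.
have [h1 h2] := IH pq mx.
have sI : inter (x :: q) \subset last x q by apply: inter_sub; apply: mem_last.
have [a [ay [az E]]] := inter_step sI ayz.
rewrite inter_rcons E size_rcons last_rcons.
have hc := cardsD1 a (inter (x :: q)).
split; first by move: h1; rewrite {1}hc; case: (a \in _) => /=; lia.
move=> t tx; rewrite -rcons_cons has_rcons => /orP [tz|ht] tnz.
  by rewrite tz in tnz.
case: (boolP (t \in last x q)) => tl; last first.
  by have := h2 t tx ht tl; rewrite {1}hc; case: (a \in _) => /=; lia.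
have ta : t = a.
  have [b hb] := adj_diff ayz.
  have : t \in last x q :\: z by rewrite inE tl tnz.
  have : a \in last x q :\: z by rewrite inE az ay.
  by rewrite hb !inE => /eqP -> /eqP ->.
have aI : a \notin inter (x :: q).
  rewrite -ta; apply: contra tx; apply/subsetP; apply: inter_sub.
  exact: mem_head.
move: h1; rewrite {1}hc (negbTE aI) /=; lia.
Qed.

Lemma cov_pathE y r : cov_path e (y :: r) = [&& all mvc (y :: r), uniq (y :: r) & path adj y r].
Proof. by []. Qed.

Lemma cov_path_rcons x q z : cov_path e (x :: rcons q z) -> cov_path e (x :: q).
Proof.
rewrite !cov_pathE -!rcons_cons all_rcons rcons_uniq rcons_path.
by case/and3P => /andP[_ ->] /andP[_ ->] /andP[->].
Qed.

Lemma cov_path_suffix p1 C p2 : cov_path e (p1 ++ C :: p2) -> cov_path e (C :: p2).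
Proof.
case: p1 => [//|w p1]; rewrite cat_cons !cov_pathE.
case/and3P => ha hu hp; apply/and3P; split.
- by move: ha; rewrite -cat_cons all_cat => /andP[].
- by move: hu; rewrite -cat_cons cat_uniq => /and3P[].
- have : sorted adj ((w :: p1) ++ C :: p2) by [].
  by case/cat_sorted2.
Qed.

Lemma mem_split (T : eqType) (x : T) r : x \in r -> exists p1 p2, r = p1 ++ x :: p2.
Proof. by case/splitPr => p1 p2; exists p1, p2. Qed.

Lemma in_inter (p : seq {set 'I_s}) a : (forall C, C \in p -> a \in C) -> a \in inter p.
Proof.
rewrite /inter; elim: p => [|D p IH] h; first by rewrite big_nil inE.
rewrite big_cons inE h ?mem_head // IH // => C hC; apply: h.
by rewrite inE hC orbT.
Qed.

Lemma path_in_union (p : seq {set 'I_s}) : cov_path e p -> size p - 1 <= al ->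
  #|inter p| = al - (size p - 1) ->
  forall C, C \in p -> C \subset head set0 p :|: last set0 p.
Proof.
case: p => [//|x q]; rewrite cov_pathE => /and3P[ha _ hp] /= hs hI C hC.
have mx : mvc x by case/andP: ha.
have [_ h2] := path_lb hp mx.
apply/subsetP => t tC; rewrite inE.
case: (boolP (t \in x)) => //= tx.
apply/negPn/negP => tl.
have := h2 t tx (introT hasP (ex_intro2 _ _ C hC tC)) tl.
rewrite hI subn1 /=; lia.
Qed.

Lemma exact_from_union :
  (forall p, cov_path e p -> forall C, C \in p -> C \subset head set0 p :|: last set0 p) ->
  forall x q, cov_path e (x :: q) -> #|inter (x :: q)| + size q = al.
Proof.
move=> HU x; elim/last_ind => [|q z IH] hp.
  by rewrite /inter big_seq1 addn0 mvc_card //; move: hp; rewrite cov_pathE; case/and3P => /andP[].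
have hp' := cov_path_rcons hp; have {}IH := IH hp'.
move: (hp); rewrite cov_pathE -rcons_cons rcons_path => /and3P[_ _ /andP[pq ayz]].
have sI : inter (x :: q) \subset last x q by apply: inter_sub; apply: mem_last.
have [a [ay [az E]]] := inter_step sI ayz.
rewrite inter_rcons E size_rcons.
have aI : a \in inter (x :: q).
  apply: in_inter => C hC; apply/negPn/negP => aC.
  have [p1 [p2 Ep]] := mem_split hC.
  have hp2 : cov_path e (C :: rcons p2 z).
    apply: (@cov_path_suffix p1); by rewrite -rcons_cons -rcons_cat -Ep rcons_cons.
  have ly : last x q = last C p2 by rewrite -[last x q]/(last x (x :: q)) Ep last_cat.
  have := HU _ hp2 (last x q); rewrite /= last_rcons.
  have : last x q \in C :: rcons p2 z.
    by rewrite ly -rcons_cons mem_rcons inE mem_last orbT.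
  move=> hm /(_ hm) /subsetP /(_ a ay); rewrite inE (negbTE aC) /=.
  by rewrite (negbTE az).
move: IH; rewrite (cardsD1 a (inter (x :: q))) aI /=; lia.
Qed.

Lemma path_take x (P : seq {set 'I_s}) k : path adj x P -> path adj x (take k P).
Proof. by rewrite -{1}(cat_take_drop k P) cat_path => /andP[]. Qed.

Lemma tree_uniq : (forall p, ~~ cov_cycle e p) ->
  forall x P Q, path adj x P -> path adj x Q -> uniq (x :: P) -> uniq (x :: Q) ->
  all mvc (x :: P) -> all mvc (x :: Q) -> last x P = last x Q -> P = Q.
Proof.
move=> nocyc x P; elim: P x => [|y P' IH] x Q hP hQ uP uQ aP aQ hl.
  case: Q hQ uQ hl {aQ} => [//|z Q'] _ /andP[xQ _] /= hl.
  by move: (mem_last z Q'); rewrite -hl (negbTE xQ).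
case: Q hQ uQ aQ hl => [|z Q'] hQ uQ aQ hl.
  move: hl => /= hl; have := mem_last y P'; rewrite hl => hx.
  by move: uP => /andP[/negP].
case: (eqVneq y z) => [yz0|yz]; first subst z.
  congr (_ :: _); apply: (IH y).
  - by case/andP: hP.
  - by case/andP: hQ.
  - by case/andP: uP.
  - by case/andP: uQ.
  - by case/andP: aP.
  - by case/andP: aQ.
  - by [].
exfalso.
set Pf := y :: P'; set Qf := z :: Q'.
have hasP : has (mem Qf) Pf.
  by apply/hasP; exists (last y P'); [apply: mem_last | rewrite /= -[last y P']/(last x Pf) hl /=; apply: mem_last].
set i := find (mem Qf) Pf.
have iP : i < size Pf by rewrite -has_find.
set w := nth x Pf i.
have wQ : w \in Qf by exact: (nth_find x hasP).
set j := index w Qf.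
have jQ : j < size Qf by rewrite index_mem.
set c := x :: take i.+1 Pf ++ rev (take j Qf).
have lPa : last x (take i.+1 Pf) = w.
  by rewrite (take_nth x iP) last_rcons.
have := nocyc c; rewrite /cov_cycle => /negP; apply; apply/and4P; split.
- rewrite /c [size (_ :: _)]/= size_cat size_rev !size_takel // ?(ltnW jQ) //.
  case: (posnP j) => [j0|]; last by lia.
  suff : 0 < i by lia.
  rewrite lt0n; apply/eqP => i0.
  have : w = z by rewrite -(nth_index x wQ) -/j j0.
  by rewrite /w i0 /= => yz'; rewrite yz' eqxx in yz.
- apply/allP => u; rewrite /c inE mem_cat mem_rev => /orP[/eqP ->|/orP[/mem_take|/mem_take] hu].
  + by case/andP: aP.
  + by apply: (allP aP); rewrite inE hu orbT.
  + by apply: (allP aQ); rewrite inE hu orbT.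
- have uPf : uniq Pf by case/andP: uP.
  have uQf : uniq Qf by case/andP: uQ.
  rewrite /c cons_uniq cat_uniq rev_uniq !take_uniq //; apply/and4P; split => //.
  rewrite mem_cat mem_rev negb_or; apply/andP; split.
  + by have := proj1 (andP uP); apply: contra; apply: mem_take.
  + by have := proj1 (andP uQ); apply: contra; apply: mem_take.
  + apply/hasPn => u; rewrite mem_rev => uQa; apply/negP => uPa.
    have uQ' : u \in Qf by apply: mem_take uQa.
    have uP' : u \in Pf by apply: mem_take uPa.
    move: uPa; rewrite in_take // ltnS leq_eqVlt => /orP[/eqP iu|iu].
      have uw : u = w by rewrite /w -iu nth_index.
      by move: uQa; rewrite in_take // uw ltnn.
    have := before_find x iu; rewrite nth_index // => /negbT.
    by rewrite /= uQ'.
- have -> : cycle adj c = path adj x (rcons (take i.+1 Pf ++ rev (take j Qf)) x) by [].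
  rewrite rcons_cat cat_path; apply/andP; split.
    exact: path_take.
  rewrite lPa.
  have -> : rcons (rev (take j Qf)) x = rev (x :: take j Qf) by rewrite rev_cons.
  have e1 : w = last x (rcons (take j Qf) w) by rewrite last_rcons.
  rewrite {1}e1 -(belast_rcons x (take j Qf) w) rev_path.
  have -> : rcons (take j Qf) w = take j.+1 Qf.
    by rewrite (take_nth x jQ) /w /j nth_index.
  have hsym : (fun a b => adj b a) =2 adj by move=> a b; rewrite adj_sym.
  rewrite (eq_path hsym); exact: path_take.
Qed.

End Comb.


Set Implicit Arguments.
Unset Strict Implicit.
Unset Printing Implicit Defensive.

Import GRing.Theory.
Open Scope ring_scope.

Section Mono.
Variables (K : fieldType) (s : nat).
Local Notation S := {mpoly K[s]}.

Definition mu (C : {set 'I_s}) : 'X_{1..s} := [multinom (i \in C : nat) | i < s].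

Lemma muE C i : mu C i = (i \in C). Proof. by rewrite mnmE. Qed.

Lemma cmE C : cover_monomial K C = 'X_[mu C].
Proof.
rewrite /cover_monomial mprodXE; congr ('X_[_]); apply/mnmP => i.
rewrite mnm_sumE muE.
rewrite (eq_bigr (fun j => (j == i : nat))) => [|j _]; last by rewrite mnm1E.
case iC: (i \in C).
  rewrite (bigD1 i) //= eqxx big1 ?addn0 // => j /andP[_ /negbTE ->] //.
rewrite big1 // => j jC; case: eqP => // ji; by rewrite -ji jC in iC.
Qed.

Lemma mdeg_mu C : mdeg (mu C) = #|C|.
Proof.
rewrite mdegE (eq_bigr (fun i => (i \in C : nat))) => [|i _]; last by rewrite muE.
by rewrite -big_mkcond /= sum1_card.
Qed.

Lemma mdeg_le (m1 m2 : 'X_{1..s}) : (m1 <= m2)%MM -> (mdeg m1 <= mdeg m2)%N.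
Proof. by move=> h; rewrite -(submK h) mdegD leq_addl. Qed.

Lemma mu_le C D : (mu C <= mu D)%MM = (C \subset D).
Proof.
apply/mnm_lepP/subsetP => h i; first by move=> iC; have := h i; rewrite !muE iC; case: (i \in D).
by rewrite !muE; case iC: (i \in C) => //=; rewrite h.
Qed.

Lemma coefMX (p : S) (n m : 'X_{1..s}) : (p * 'X_[n])@_m = if (n <= m)%MM then p@_(m - n)%MM else 0.
Proof.
case: ifP => h.
  by rewrite -{1}(submK h) addmC mcoeffMX.
apply/eqP; rewrite mcoeff_eq0 (perm_mem (msuppMX _ _)); apply/mapP => [[m' _ hm]].
by rewrite hm lem_addr in h.
Qed.

Lemma homog0 d : homog_of d (0 : S).
Proof. by move=> m; rewrite msupp0. Qed.

Lemma homogD d (p q : S) : homog_of d p -> homog_of d q -> homog_of d (p + q).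
Proof. by move=> hp hq m /msuppD_le; rewrite mem_cat => /orP[/hp|/hq]. Qed.

Lemma homogN d (p : S) : homog_of d p -> homog_of d (- p).
Proof. by move=> hp m; rewrite (perm_mem (msuppN _)) => /hp. Qed.

Lemma homogX1 (b : 'I_s) : homog_of 1 ('X_b : S).
Proof. by move=> m; rewrite msuppX inE => /eqP ->; rewrite mdeg1. Qed.

Lemma homogXm (m : 'X_{1..s}) : homog_of (mdeg m) ('X_[m] : S).
Proof. by move=> m'; rewrite msuppX inE => /eqP ->. Qed.


End Mono.

Section Alg.
Variables (K : fieldType) (s : nat) (e : rel 'I_s).
Hypothesis unm : unmixed e.
Local Notation S := {mpoly K[s]}.
Local Notation mvc := (min_vertex_cover e).
Local Notation adj := (cov_adj e).
Local Notation al := (alpha0 e).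
Local Notation us := (Ic_gens K e).
Local Notation r := (size us).
Local Notation mu := (@mu s).

Definition cs := enum mvc.

Definition cov (i : 'I_r) : {set 'I_s} := nth set0 cs i.

Lemma size_us : r = size cs.
Proof. by rewrite /Ic_gens size_map. Qed.

Lemma usE (i : 'I_r) : us`_i = 'X_[mu (cov i)].
Proof.
have hi : (i < size cs)%N by rewrite -size_us.
by rewrite /Ic_gens (nth_map set0) // cmE.
Qed.

Lemma cov_mvc i : mvc (cov i).
Proof.
have hi : (i < size cs)%N by rewrite -size_us.
by have := mem_nth set0 hi; rewrite mem_enum.
Qed.

Lemma cov_inj : injective cov.
Proof.
move=> i j h; apply/val_inj/eqP.
have hi : (i < size cs)%N by rewrite -size_us.
have hj : (j < size cs)%N by rewrite -size_us.
by rewrite -(nth_uniq set0 hi hj (enum_uniq _)); rewrite /cov in h; rewrite h.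
Qed.

Lemma cov_surj C : mvc C -> exists i, cov i = C.
Proof.
move=> hC; have hi : (index C cs < r)%N by rewrite size_us index_mem mem_enum.
by exists (Ordinal hi); rewrite /cov /= nth_index // mem_enum.
Qed.

Definition delta (i : 'I_r) (p : S) : 'I_r -> S := fun k => if k == i then p else 0.

Lemma sum_delta i p (F : 'I_r -> S) : \sum_k delta i p k * F k = p * F i.
Proof.
rewrite (bigD1 i) //= /delta eqxx big1 ?addr0 // => k /negbTE ->; exact: mul0r.
Qed.

Lemma syzE (v : 'I_r -> S) : syzygy v <-> \sum_k v k * 'X_[mu (cov k)] = 0.
Proof.
by rewrite /syzygy (eq_bigr (fun k => v k * 'X_[mu (cov k)])) // => k _; rewrite usE.
Qed.

Definition LS := (S * {ffun 'I_r -> S})%type.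

Definition linsyz (w : 'I_r -> S) := syzygy w /\ forall i, homog_of 1 (w i).

Definition inL (v : 'I_r -> S) :=
  exists l : seq LS, (forall x, x \in l -> linsyz x.2) /\
    forall i, v i = \sum_(x <- l) x.1 * x.2 i.

Lemma inL_ext v w : (forall i, v i = w i) -> inL v -> inL w.
Proof. by move=> h [l [h1 h2]]; exists l; split => // i; rewrite -h. Qed.

Lemma inL0 : inL (fun _ => 0).
Proof. by exists [::]; split => // i; rewrite big_nil. Qed.

Lemma inLD v w : inL v -> inL w -> inL (fun i => v i + w i).
Proof.
move=> [l1 [h1 h1']] [l2 [h2 h2']]; exists (l1 ++ l2); split.
  by move=> x; rewrite mem_cat => /orP[/h1|/h2].
by move=> i; rewrite big_cat h1' h2'.
Qed.

Lemma inLM a v : inL v -> inL (fun i => a * v i).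
Proof.
move=> [l [h1 h2]]; exists [seq (a * x.1, x.2) | x <- l]; split.
  by move=> x /mapP [y hy ->]; exact: h1 hy.
by move=> i; rewrite big_map h2 mulr_sumr; apply: eq_bigr => x _; rewrite mulrA.
Qed.

Lemma inL_lin w : linsyz w -> inL w.
Proof.
move=> hw; exists [:: (1, finfun w)]; split.
  move=> x; rewrite inE => /eqP -> /=; rewrite /linsyz; split.
    move: (proj1 hw); rewrite /syzygy => h; rewrite -[RHS]h; apply: eq_bigr => k _; by rewrite ffunE.
  by move=> i; rewrite ffunE; apply: (proj2 hw).
by move=> i; rewrite big_seq1 /= ffunE mul1r.
Qed.

Lemma inL_sum (I : Type) (rr : seq I) (F : I -> 'I_r -> S) :
  (forall k, inL (F k)) -> inL (fun i => \sum_(k <- rr) F k i).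
Proof.
move=> h; elim: rr => [|k rr IH].
  by apply: inL_ext inL0 => i; rewrite big_nil.
by apply: inL_ext (inLD (h k) IH) => i; rewrite big_cons.
Qed.


Lemma adj_mu C D : adj C D -> exists a b, [/\ a \in C, a \notin D, b \in D, b \notin C &
  (mu C + U_(b) = mu D + U_(a))%MM].
Proof.
move=> h; have [a ha] := adj_diff unm h.
have h' : adj D C by rewrite adj_sym.
have [b hb] := adj_diff unm h'.
have : a \in C :\: D by rewrite ha set11.
have : b \in D :\: C by rewrite hb set11.
rewrite !inE => /andP[bC bD] /andP[aD aC]; exists a, b; split => //.
apply/mnmP => t; rewrite !mnmDE !muE !mnm1E.
case tC: (t \in C); case tD: (t \in D) => /=.
- have -> : (b == t) = false by apply/eqP => bt; rewrite bt tC in bC.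
  have -> : (a == t) = false by apply/eqP => at'; rewrite at' tD in aD.
  by [].
- have : t \in C :\: D by rewrite inE tC tD.
  rewrite ha inE => /eqP ->; rewrite eqxx.
  have -> : (b == a) = false by apply/eqP => ba; rewrite ba aC in bC.
  by [].
- have : t \in D :\: C by rewrite inE tC tD.
  rewrite hb inE => /eqP ->; rewrite eqxx.
  have -> : (a == b) = false by apply/eqP => ab; rewrite ab bD in aD.
  by [].
- have -> : (b == t) = false by apply/eqP => bt; rewrite bt tD in bD.
  have -> : (a == t) = false by apply/eqP => at'; rewrite at' tC in aC.
  by [].
Qed.

Lemma subDadd (n1 n2 m : 'X_{1..s}) : (n1 + n2 <= m)%MM -> (m - (n1 + n2) + n2 = m - n1)%MM.
Proof.
move/mnm_lepP => h; apply/mnmP => t; rewrite !(mnmDE, mnmBE).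
have := h t; rewrite mnmDE; lia.
Qed.

Lemma homog_delta d i p k : homog_of d p -> homog_of d (delta i p k).
Proof. by rewrite /delta; case: (k == i) => // _; apply: homog0. Qed.

Definition Dv (m : 'X_{1..s}) (i j : 'I_r) : 'I_r -> S :=
  fun k => delta i 'X_[m - mu (cov i)] k - delta j 'X_[m - mu (cov j)] k.

Lemma inL_adj m i j : adj (cov i) (cov j) -> (mu (cov i) <= m)%MM -> (mu (cov j) <= m)%MM ->
  inL (Dv m i j).
Proof.
move=> h hi hj; have [a [b [aC aD bD bC E]]] := adj_mu h.
pose w := fun k => delta i 'X_b k - delta j 'X_a k.
have lw : linsyz w.
  split.
    apply/syzE; rewrite /w.
    under eq_bigr do rewrite mulrBl.
    rewrite sumrB !sum_delta -!mpolyXD.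
    by rewrite [(U_(b) + _)%MM]addmC [(U_(a) + _)%MM]addmC E subrr.
  move=> k; rewrite /w; apply: homogD; first by apply: homog_delta; apply: homogX1.
  by apply: homogN; apply: homog_delta; apply: homogX1.
have le1 : (mu (cov i) + U_(b) <= m)%MM.
  apply/mnm_lepP => t; rewrite mnmDE muE mnm1E.
  move/mnm_lepP: hi => /(_ t); move/mnm_lepP: hj => /(_ t); rewrite !muE.
  case: (eqVneq b t) => [<-|_]; last by rewrite addn0.
  by rewrite (negbTE bC) bD.
pose M0 := (m - (mu (cov i) + U_(b)))%MM.
apply: inL_ext (inLM 'X_[M0] (inL_lin lw)) => k.
rewrite /w /Dv /delta; case: (k == i); case: (k == j);
  rewrite ?subr0 ?sub0r ?mulr0 ?mulrN ?mulrBr -?mpolyXD /M0 ?subDadd //.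
- by rewrite E subDadd // -E.
- by rewrite E subDadd // -E.
Qed.

Lemma inL_path m x q : path adj x q -> (forall C, C \in x :: q -> (mu C <= m)%MM) ->
  forall i j, cov i = x -> cov j = last x q -> inL (Dv m i j).
Proof.
elim: q x => [|y q IH] x hp hm i j hi hj.
  have ij : i = j by apply: cov_inj; rewrite hi hj.
  by subst j; apply: inL_ext inL0 => k; rewrite /Dv subrr.
move: hp => /= /andP[hxy hp].
have [_ my] := adj_mvc hxy.
have [i' hi'] := cov_surj my.
have hmx : (mu x <= m)%MM by apply: hm; rewrite mem_head.
have hmy : (mu y <= m)%MM by apply: hm; rewrite !inE eqxx orbT.
apply: inL_ext (inLD (inL_adj (m := m) (i := i) (j := i') _ _ _) (IH y hp _ i' j hi' hj)).
- by move=> k; rewrite /Dv addrA subrK.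
- by rewrite hi hi'.
- by rewrite hi.
- by rewrite hi'.
- by move=> C hC; apply: hm; rewrite inE hC orbT.
Qed.


Definition meas (v : 'I_r -> S) := (\sum_k size (msupp (v k)))%N.

Section Reduce.
Hypothesis Hpair : forall m i j, (mu (cov i) <= m)%MM -> (mu (cov j) <= m)%MM -> inL (Dv m i j).

Lemma reduce_step v : syzygy v -> (exists k, v k != 0) ->
  exists v', [/\ syzygy v', (meas v' < meas v)%N & (inL v' -> inL v)].
Proof.
move=> hv [i0 hi0].
case E: (msupp (v i0)) => [|n0 rest].
  by move/eqP: E; rewrite msupp_eq0 (negbTE hi0).
have n0v : n0 \in msupp (v i0) by rewrite E mem_head.
pose m := (n0 + mu (cov i0))%MM.
have hm0 : (mu (cov i0) <= m)%MM by apply: lem_addl.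
pose c k := if (mu (cov k) <= m)%MM then (v k)@_(m - mu (cov k)) else 0.
pose comp k := (c k)%:MP * 'X_[m - mu (cov k)].
have hsum : \sum_k c k = 0.
  have := hv; rewrite syzE => hs.
  transitivity (mcoeff m (\sum_k v k * 'X_[mu (cov k)])); last by rewrite hs mcoeff0.
  by rewrite raddf_sum; apply: eq_bigr => k _; apply: esym; exact: (coefMX (v k) (mu (cov k)) m).
have hcomp : inL comp.
  apply: (@inL_ext (fun k => \sum_(l <- index_enum 'I_r) (c l)%:MP * Dv m l i0 k)).
    move=> k; rewrite /Dv.
    under eq_bigr do rewrite mulrBr.
    rewrite sumrB (bigD1 k) //= big1 => [|l /negbTE lk]; last first.
      by rewrite /delta eq_sym lk mulr0.
    rewrite -mulr_suml -raddf_sum /= hsum mpolyC0 mul0r subr0 addr0 /delta eqxx.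
    by [].
  apply: inL_sum => l; rewrite /c.
  case: ifP => hl; first by apply: inLM; apply: Hpair.
  by apply: inL_ext inL0 => k; rewrite mpolyC0 mul0r.
pose v' k := v k - comp k.
have hcoef k t : (v' k)@_t = if (mu (cov k) <= m)%MM && (t == m - mu (cov k))%MM then 0 else (v k)@_t.
  rewrite /v' /comp mcoeffB mcoeffCM mcoeffX /c.
  case: ifP => hk /=; last by rewrite mul0r subr0.
  case: (eqVneq t (m - mu (cov k))%MM) => [->|ht]; first by rewrite mulr1 subrr.
  by rewrite mulr0 subr0.
have hsub k : {subset msupp (v' k) <= msupp (v k)}.
  move=> t; rewrite !mcoeff_msupp hcoef; case: ifP => //; by rewrite eqxx.
have hle k : (size (msupp (v' k)) <= size (msupp (v k)))%N.
  by apply: uniq_leq_size; [apply: msupp_uniq | apply: hsub].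
have hlt : (size (msupp (v' i0)) < size (msupp (v i0)))%N.
  have n0v' : n0 \notin msupp (v' i0).
    rewrite mcoeff_msupp hcoef hm0 /=.
    have -> : (m - mu (cov i0))%MM = n0 by rewrite /m addmK.
    by rewrite eqxx eqxx.
  have := @uniq_leq_size _ (n0 :: msupp (v' i0)) (msupp (v i0)).
  rewrite /= n0v' msupp_uniq; apply => //.
  by move=> t; rewrite inE => /orP[/eqP ->|/hsub].
exists v'; split.
- apply/syzE.
  under eq_bigr do rewrite mulrBl.
  rewrite sumrB; move/syzE: hv => ->.
  rewrite (eq_bigr (fun k => (c k)%:MP * 'X_[m])) => [|k _].
    by rewrite -mulr_suml -raddf_sum /= hsum mpolyC0 mul0r subrr.
  rewrite /comp -mulrA -mpolyXD /c; case: ifP => hk; last by rewrite mpolyC0 !mul0r.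
  by rewrite submK.
- rewrite /meas (bigD1 i0) //= [X in (_ < X)%N](bigD1 i0) //=.
  have : (\sum_(k | k != i0) size (msupp (v' k)) <= \sum_(k | k != i0) size (msupp (v k)))%N by apply: leq_sum => k _; apply: hle.
  by move=> h; rewrite -addSn; apply: leq_add.
- move=> hv'; apply: inL_ext (inLD hv' hcomp) => k.
  by rewrite /v' subrK.
Qed.

Lemma syz_inL v : syzygy v -> inL v.
Proof.
move: {2}(meas v) (leqnn (meas v)) => n; elim: n v => [|n IH] v hn hv.
  apply: inL_ext inL0 => k; apply/esym/msuppnil0/eqP; rewrite -size_eq0.
  have : (size (msupp (v k)) <= meas v)%N by rewrite /meas (bigD1 k) //= leq_addr.
  move: hn; rewrite leqn0 => /eqP ->; by rewrite leqn0.
case: (boolP [exists k, v k != 0]) => [/existsP ex|].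
  have [v' [hv' hlt himp]] := reduce_step hv ex.
  apply: himp; apply: IH hv'; lia.
rewrite negb_exists => /forallP hz.
by apply: inL_ext inL0 => k; have := hz k; rewrite negbK => /eqP ->.
Qed.

End Reduce.


Lemma lem_swap (n mk m : 'X_{1..s}) : (mk <= m)%MM -> (n <= m)%MM ->
  (n <= m - mk)%MM = (mk <= m - n)%MM.
Proof.
move=> /mnm_lepP h1 /mnm_lepP h2.
apply/mnm_lepP/mnm_lepP => h t; have := h t; have := h1 t; have := h2 t; rewrite !mnmBE; lia.
Qed.

Lemma mdeg_sub (m1 m2 : 'X_{1..s}) : (m1 <= m2)%MM -> mdeg m2 = (mdeg (m2 - m1) + mdeg m1)%N.
Proof. by move=> h; rewrite -mdegD submK. Qed.

Lemma adj_of_deg (X Y : {set 'I_s}) (m : 'X_{1..s}) : mvc X -> mvc Y -> X != Y ->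
  (mu X <= m)%MM -> (mu Y <= m)%MM -> mdeg m = al.+1 -> adj X Y.
Proof.
move=> mX mY XY hX hY hm.
have hU : (mu (X :|: Y) <= m)%MM.
  apply/mnm_lepP => t; move/mnm_lepP: hX => /(_ t); move/mnm_lepP: hY => /(_ t).
  rewrite !muE inE; by case: (t \in X); case: (t \in Y).
have := mdeg_le hU; rewrite mdeg_mu hm => hle.
rewrite /cov_adj mX mY XY /=.
have cX := mvc_card unm mX; have cY := mvc_card unm mY.
have hI : (#|X :&: Y| < #|X|)%N.
  rewrite ltn_neqAle subset_leq_card ?subsetIl // andbT.
  apply/negP => /eqP hc.
  have sXY : X \subset Y.
    have : X :&: Y == X by rewrite eqEcard subsetIl hc leqnn.
    by move/eqP => <-; apply: subsetIr.
  by move: XY; rewrite eqEcard sXY cX cY leqnn.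
have := cardsUI X Y; rewrite cX cY in hI *; move: hle => h1 h2; apply/eqP; move: h1 h2 hI; set x := #|X :|: Y|; set y := #|X :&: Y|. lia.
Qed.

Lemma G0 (P : pred 'I_r) (m : 'X_{1..s}) (a : S) (w : 'I_r -> S) : linsyz w ->
  (forall k, P k -> (mu (cov k) <= m)%MM) ->
  (forall k l, (mu (cov k) <= m)%MM -> (mu (cov l) <= m)%MM -> adj (cov k) (cov l) -> P k = P l) ->
  \sum_(k | P k) (a * w k)@_(m - mu (cov k)) = 0.
Proof.
move=> [hw hh] hP hcl.
have key n : \sum_(k | P k) (w k * 'X_[n])@_(m - mu (cov k)) = 0.
  case: (boolP (n <= m)%MM) => hnm; last first.
    apply: big1 => k _; rewrite coefMX; case: ifP => // h.
    by rewrite (lepm_trans h (lem_subr _ _)) in hnm.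
  pose m' := (m - n)%MM.
  pose F k := if (mu (cov k) <= m')%MM then (w k)@_(m' - mu (cov k)) else 0.
  rewrite (eq_bigr F) => [|k Pk]; last first.
    rewrite coefMX /F lem_swap ?hP //; case: ifP => // _.
    by rewrite submDA addmC -submDA.
  have hF : \sum_k F k = 0.
    have := hw; rewrite syzE => hs.
    transitivity (mcoeff m' (\sum_k w k * 'X_[mu (cov k)])); last by rewrite hs mcoeff0.
    by rewrite raddf_sum; apply: eq_bigr => k _; apply: esym; exact: (coefMX (w k) (mu (cov k)) m').
  have hm'm : (m' <= m)%MM by apply: lem_subr.
  have degF k : F k != 0 -> (mu (cov k) <= m')%MM /\ mdeg m' = al.+1.
    rewrite /F; case: ifP => hk; last by rewrite eqxx.
    rewrite -mcoeff_msupp => /hh h1; split => //.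
    by rewrite (mdeg_sub hk) h1 mdeg_mu (mvc_card unm (cov_mvc _)).
  have cl k l : F k != 0 -> F l != 0 -> P k = P l.
    move=> /degF [hk hd] /degF [hl _].
    case: (eqVneq k l) => [-> //|kl].
    apply: hcl; [exact: lepm_trans hk hm'm | exact: lepm_trans hl hm'm|].
    apply: (adj_of_deg (m := m')) => //; try exact: cov_mvc.
    by apply: contra kl => /eqP /cov_inj ->.
  case: (boolP [exists k, (F k != 0) && P k]) => [/existsP [k0 /andP[Fk0 Pk0]]|].
    rewrite big_mkcond /= -[RHS]hF; apply: eq_bigr => k _.
    case: ifP => // Pk; case: (eqVneq (F k) 0) => // Fk.
    by rewrite (cl k k0 Fk Fk0) Pk0 in Pk.
  rewrite negb_exists => /forallP hn; apply: big1 => k Pk.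
  by apply/eqP; have := hn k; rewrite Pk andbT negbK.
elim/mpolyind: a => [|c n p _ _ IH].
  by apply: big1 => k _; rewrite mul0r mcoeff0.
rewrite (eq_bigr (fun k => c * (w k * 'X_[n])@_(m - mu (cov k)) + (p * w k)@_(m - mu (cov k)))).
  by rewrite big_split /= IH addr0 -mulr_sumr key mulr0.
move=> k _; rewrite mulrDl mcoeffD -scalerAl mcoeffZ [w k * _]mulrC.
by [].
Qed.


Definition rU (U : {set 'I_s}) : rel {set 'I_s} := fun X Y => [&& adj X Y, X \subset U & Y \subset U].

Lemma rU_path_sub U x p : path (rU U) x p -> x \subset U -> all (fun Y : {set 'I_s} => Y \subset U) (x :: p).
Proof.
elim: p x => [|y p IH] x /=; first by move=> _ ->.
by case/andP => /and3P[_ _ yU] hp ->; apply: IH.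
Qed.

Lemma path_mvc x p : path adj x p -> all mvc p.
Proof.
elim: p x => [|y p IH] x //= /andP[hxy hp].
by rewrite (proj2 (adj_mvc hxy)) (IH y hp).
Qed.

Lemma connect_sub U X Y : connect (rU U) X Y -> X \subset U -> Y \subset U.
Proof.
move=> /connectP [p hp ->] hX.
by have /allP := rU_path_sub hp hX; apply; apply: mem_last.
Qed.

Lemma LP_connect : linearly_presented us -> forall C D, mvc C -> mvc D ->
  connect (rU (C :|: D)) C D.
Proof.
move=> [_ LP] C D mC mD.
case hc: (connect (rU (C :|: D)) C D) => //; exfalso.
set U := C :|: D; pose m := mu U.
have [i hi] := cov_surj mC; have [j hj] := cov_surj mD.
have ij : i != j.
  by apply/eqP => ij; subst j; move: hc; rewrite -hi hj connect0.
have hiU : (mu (cov i) <= m)%MM by rewrite hi mu_le subsetUl.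
have hjU : (mu (cov j) <= m)%MM by rewrite hj mu_le subsetUr.
have sv : syzygy (Dv m i j).
  apply/syzE; rewrite /Dv.
  under eq_bigr do rewrite mulrBl.
  by rewrite sumrB !sum_delta -!mpolyXD !submK // subrr.
have [N [c [w [hw hv]]]] := LP _ sv.
pose Sp k := connect (rU U) C (cov k).
have g1 : \sum_(k | Sp k) (Dv m i j k)@_(m - mu (cov k)) = 1.
  rewrite (bigD1 i) /=; last by rewrite /Sp hi connect0.
  rewrite big1 => [|k /andP[Spk ki]].
    by rewrite /Dv /delta eqxx (negbTE ij) subr0 mcoeffX eqxx addr0.
  have kj : k != j by apply: contraTneq Spk => ->; rewrite /Sp hj hc.
  by rewrite /Dv /delta (negbTE ki) (negbTE kj) subrr mcoeff0.
have g0 : \sum_(k | Sp k) (Dv m i j k)@_(m - mu (cov k)) = 0.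
  rewrite (eq_bigr (fun k => \sum_(l < N) (c l * w l k)@_(m - mu (cov k)))) => [|k _]; last first.
    by rewrite hv raddf_sum.
  rewrite exchange_big /=; apply: big1 => l _.
  apply: G0.
  - exact: hw l.
  - move=> k; rewrite /Sp => h; rewrite mu_le; apply: connect_sub h _.
    exact: subsetUl.
  - move=> k k2 hk hl hadj; rewrite !mu_le in hk hl.
    have r1 : rU U (cov k) (cov k2) by rewrite /rU hadj hk hl.
    have r2 : rU U (cov k2) (cov k) by rewrite /rU (adj_sym unm) hadj hk hl.
    apply/idP/idP => h; [exact: connect_trans h (connect1 r1) | exact: connect_trans h (connect1 r2)].
by move: g1; rewrite g0 => /eqP; rewrite eq_sym oner_eq0.
Qed.

Lemma LP_union : linearly_presented us -> (forall p, ~~ cov_cycle e p) ->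
  forall p, cov_path e p -> forall C, C \in p -> C \subset head set0 p :|: last set0 p.
Proof.
move=> hLP nocyc [//|x q] hp C hC /=.
move: (hp); rewrite cov_pathE => /and3P [ha hu hq].
have mx : mvc x by case/andP: ha.
have mD : mvc (last x q) by apply: (allP ha); apply: mem_last.
have /connectP [p1 hp1 hl1] := LP_connect hLP mx mD.
move: hl1; case: (shortenP hp1) => p2 hp2 hu2 _ hl1.
have sub2 : subrel (rU (x :|: last x q)) adj by move=> X Y /and3P[].
have hp2' : path adj x p2 := sub_path sub2 hp2.
have qp2 : q = p2.
  apply: (tree_uniq unm nocyc hq hp2' hu hu2 ha) => //.
    by rewrite /= mx (path_mvc hp2').
have /allP := rU_path_sub hp2 (subsetUl _ _); apply.
by rewrite -qp2.
Qed.


Lemma mu_union_le (X Y : {set 'I_s}) (m : 'X_{1..s}) : (mu X <= m)%MM -> (mu Y <= m)%MM -> (mu (X :|: Y) <= m)%MM.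
Proof.
move=> hX hY; apply/mnm_lepP => t; move/mnm_lepP: hX => /(_ t); move/mnm_lepP: hY => /(_ t).
rewrite !muE inE; by case: (t \in X); case: (t \in Y).
Qed.

End Alg.

Close Scope ring_scope.

Theorem corollary4p7 (K : fieldType) (s : nat) (e : rel 'I_s) :
  simple_graph e -> unmixed e -> cov_graph_tree e ->
  linearly_presented (Ic_gens K e) <->
  (forall p : seq {set 'I_s}, cov_path e p ->
     size p - 1 <= alpha0 e /\
     #|\bigcap_(C <- p) C| = alpha0 e - (size p - 1)).
Proof.
move=> _ unm [conn nocyc]; split.
- move=> hLP p hp.
  have HU := LP_union unm hLP nocyc.
  case: p hp => [//|x q] hp.
  have := exact_from_union unm HU hp; rewrite /inter /= subn1 /= => h.
  split; lia.
- move=> HPC.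
  have Hsub : forall p, cov_path e p -> forall C, C \in p -> C \subset head set0 p :|: last set0 p.
    by move=> p hp; have [h1 h2] := HPC p hp; apply: (path_in_union unm hp h1 h2).
  have Hpair : forall m (i j : 'I_(size (Ic_gens K e))), (mu (@cov K s e i) <= m)%MM -> (mu (@cov K s e j) <= m)%MM -> inL (@Dv K s e m i j).
    move=> m i j hi hj.
    have [p [hp [hh hl]]] := conn _ _ (cov_mvc i) (cov_mvc j).
    case: p hp hh hl => [//|x q] hp /= hh hl.
    move: (hp); rewrite cov_pathE => /and3P [_ _ hq].
    apply: (inL_path unm hq); last by rewrite -hl.
      move=> C hC; have := Hsub _ hp C hC; rewrite /= hl hh -mu_le => hC'.
      exact: lepm_trans hC' (mu_union_le hi hj).
    by rewrite -hh.
  split.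
  + exists (alpha0 e) => u /mapP [C hC ->]; rewrite cmE.
    rewrite mem_enum in hC.
    by rewrite -(mvc_card unm hC) -mdeg_mu; apply: homogXm.
  + move=> v hv; have [l [hl hvl]] := syz_inL Hpair hv.
    pose x0 : LS K e := (0%R, [ffun=> 0%R]).
    exists (size l), (fun k => (nth x0 l k).1), (fun k i => (nth x0 l k).2 i); split.
      by move=> k; apply: hl; apply: mem_nth.
    by move=> i; rewrite hvl (big_nth x0) big_mkord.
Qed.
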